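(* Let $U$ be a nonempty open subset of $\mathbb{R}^d$ and let $(a_n)_{n\ge1}$ be a sequence of points of $U$ such that $\inf_\lambda\liminf_{j\to\infty}2^{-dj}\#\mathrm{M}((a_n)_{n\ge1};\lambda,j)>0$, the infimum over all nonempty dyadic cubes $\lambda\subseteq U$. Let $\mathcal{A}=\{a_n:n\ge1\}$ and define $H:\mathcal{A}\to(0,\infty)$ by $H(a)=(\min\{n\ge1:a=a_n\})^{1/d}$. Then $(\mathcal{A},H)$ is an optimal regular system in $U$.
   Context: Fix a norm $|\cdot|$ on $\mathbb{R}^d$, diameters taken with respect to it. Let $\mathcal{A}\subseteq\mathbb{R}^d$ be countably infinite and $H:\mathcal{A}\to(0,\infty)$. The pair $(\mathcal{A},H)$ is admissible if for every integer $m\ge1$ the set $\{a\in\mathcal{A}:|a|<m,\ H(a)\le m\}$ is finite. It is a regular system in an open set $U$ if it is admissible and there is $\kappa>0$ such that for every open ball $B\subseteq U$ there is $h_B>0$ such that for all $h>h_B$ there is $\mathcal{A}_{B,h}\subseteq\mathcal{A}\cap B$ with $\#\mathcal{A}_{B,h}\ge\kappa(\mathrm{diam}\,B)^dh^d$, $H(a)\le h$ for $a\in\mathcal{A}_{B,h}$, and $|a-a'|\ge1/h$ for distinct $a,a'\in\mathcal{A}_{B,h}$. It is an optimal system in $U$ if it is admissible and for every open ball $B$ there are $\kappa'_B,h'_B>0$ with $\#\{a\in\mathcal{A}\cap U\cap B:H(a)\le h\}\le\kappa'_Bh^d$ for $h>h'_B$. An optimal regular system is one that is both. A dyadic cube is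 $\lambda=2^{-j}(k+[0,1)^d)$, $j\in\mathbb{Z}$, $k\in\mathbb{Z}^d$, of generation $\langle\lambda\rangle=j$; $\mathrm{M}((x_n)_{n\ge1};\lambda,j)$ is the set of dyadic cubes $\lambda'\subseteq\lambda$ of generation $\langle\lambda\rangle+j$ containing some $x_n$ with $n\le2^{d\langle\lambda'\rangle}$. *)

(* Defs.v *)
From Stdlib Require Import Reals Lra List ZArith.
From Stdlib Require Fin.
Open Scope R_scope.

Definition pt (d : nat) := Fin.t d -> R.

Definition vsub {d} (x y : pt d) : pt d := fun i => x i - y i.
Definition vadd {d} (x y : pt d) : pt d := fun i => x i + y i.
Definition vscal {d} (c : R) (x : pt d) : pt d := fun i => c * x i.
Definition vzero {d} : pt d := fun _ => 0.

Definition is_norm {d} (N : pt d -> R) : Prop :=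
  (forall x, N x = 0 -> x = vzero) /\
  (forall c x, N (vscal c x) = Rabs c * N x) /\
  (forall x y, N (vadd x y) <= N x + N y).

Definition ball {d} (N : pt d -> R) (c : pt d) (r : R) : pt d -> Prop :=
  fun x => N (vsub x c) < r.

Definition subset {X} (A B : X -> Prop) : Prop := forall x, A x -> B x.

Definition is_open {d} (N : pt d -> R) (U : pt d -> Prop) : Prop :=
  forall x, U x -> exists r, r > 0 /\ subset (ball N x r) U.

Definition is_diam {d} (N : pt d -> R) (S : pt d -> Prop) (D : R) : Prop :=
  is_lub (fun t => exists x y, S x /\ S y /\ t = N (vsub x y)) D.

Definition dcube {d} (j : Z) (k : Fin.t d -> Z) : pt d -> Prop :=
  fun x => forall i, IZR (k i) * powerRZ 2 (- j) <= x i < (IZR (k i) + 1) * powerRZ 2 (- j).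

(* k' in M((a_n); lambda, j) where lambda = dcube j0 k: the cube dcube (j0+j) k'
   is contained in lambda and contains some a_n with 1 <= n <= 2^(d (j0+j)) *)
Definition inM {d} (a : nat -> pt d) (j0 : Z) (k : Fin.t d -> Z) (j : nat)
  (k' : Fin.t d -> Z) : Prop :=
  subset (dcube (j0 + Z.of_nat j) k') (dcube j0 k) /\
  exists n, (1 <= n)%nat /\ INR n <= powerRZ 2 (Z.of_nat d * (j0 + Z.of_nat j)) /\
            dcube (j0 + Z.of_nat j) k' (a n).

Definition card_ge {X} (P : X -> Prop) (n : nat) : Prop :=
  exists l : list X, NoDup l /\ length l = n /\ forall x, In x l -> P x.

Definition card_le_R {X} (P : X -> Prop) (t : R) : Prop :=
  forall l : list X, NoDup l -> (forall x, In x l -> P x) -> INR (length l) <= t.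

Definition countably_infinite {X} (A : X -> Prop) : Prop :=
  (exists f : nat -> X, forall x, A x <-> exists n, f n = x) /\
  ~ (exists l : list X, forall x, A x -> In x l).

Definition admissible {d} (N : pt d -> R) (A : pt d -> Prop) (H : pt d -> R) : Prop :=
  countably_infinite A /\ (forall a, A a -> H a > 0) /\
  forall m : nat, (1 <= m)%nat ->
    exists l : list (pt d), forall a, A a -> N a < INR m -> H a <= INR m -> In a l.

Definition regular_system {d} (N : pt d -> R) (A : pt d -> Prop) (H : pt d -> R)
  (U : pt d -> Prop) : Prop :=
  admissible N A H /\
  exists kappa, kappa > 0 /\
    forall c r, r > 0 -> subset (ball N c r) U ->
    forall D, is_diam N (ball N c r) D ->
    exists hB, hB > 0 /\ forall h, h > hB ->
      exists l : list (pt d),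
        NoDup l /\
        INR (length l) >= kappa * D ^ d * h ^ d /\
        (forall a, In a l -> A a /\ ball N c r a /\ H a <= h) /\
        (forall a a', In a l -> In a' l -> a <> a' -> N (vsub a a') >= 1 / h).

Definition optimal_system {d} (N : pt d -> R) (A : pt d -> Prop) (H : pt d -> R)
  (U : pt d -> Prop) : Prop :=
  admissible N A H /\
  forall c r, r > 0 ->
    exists kappa' hB', kappa' > 0 /\ hB' > 0 /\ forall h, h > hB' ->
      card_le_R (fun a => A a /\ U a /\ ball N c r a /\ H a <= h) (kappa' * h ^ d).

Definition optimal_regular_system {d} (N : pt d -> R) (A : pt d -> Prop)
  (H : pt d -> R) (U : pt d -> Prop) : Prop :=
  optimal_system N A H U /\ regular_system N A H U.

(* Main.v *)
Require Import Defs.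
From Stdlib Require Import Reals List ZArith.
From Stdlib Require Fin.
From Stdlib Require Import Lra Lia Classical ClassicalEpsilon FunctionalExtensionality.
Open Scope R_scope.

Definition seminorm {d} (N : pt d -> R) : Prop :=
  (forall c x, N (vscal c x) = Rabs c * N x) /\
  (forall x y, N (vadd x y) <= N x + N y).

Lemma norm_semi {d} (N : pt d -> R) : is_norm N -> seminorm N.
Proof. intros [_ [h1 h2]]; split; auto. Qed.

Lemma Rabs_m1 : Rabs (-1) = 1.
Proof. rewrite Rabs_left; lra. Qed.

Lemma semi_zero {d} (N : pt d -> R) : seminorm N -> N vzero = 0.
Proof.
  intros [h1 h2]. replace (@vzero d) with (vscal 0 (@vzero d)).
  rewrite h1, Rabs_R0; ring.
  apply functional_extensionality; intro i; unfold vscal, vzero; ring.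
Qed.

Lemma semi_nonneg {d} (N : pt d -> R) : seminorm N -> forall x, 0 <= N x.
Proof.
  intros hs x. pose proof (semi_zero N hs) as h0. destruct hs as [h1 h2].
  assert (vadd x (vscal (-1) x) = vzero) as e.
  { apply functional_extensionality; intro i; unfold vadd, vscal, vzero; ring. }
  pose proof (h2 x (vscal (-1) x)) as t. rewrite e, h0, h1 in t.
  rewrite Rabs_m1 in t. lra.
Qed.

Lemma semi_sym {d} (N : pt d -> R) : seminorm N -> forall x y, N (vsub x y) = N (vsub y x).
Proof.
  intros [h1 h2] x y. replace (vsub x y) with (vscal (-1) (vsub y x)).
  rewrite h1, Rabs_m1; ring.
  apply functional_extensionality; intro i; unfold vsub, vscal; ring.
Qed.

Lemma semi_tri {d} (N : pt d -> R) : seminorm N ->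
  forall x y z, N (vsub x y) <= N (vsub x z) + N (vsub z y).
Proof.
  intros [h1 h2] x y z. replace (vsub x y) with (vadd (vsub x z) (vsub z y)). apply h2.
  apply functional_extensionality; intro i; unfold vsub, vadd; ring.
Qed.

Definition vcons {d} (t : R) (y : pt d) : pt (S d) :=
  fun i => Fin.caseS' i (fun _ => R) t y.
Definition vtl {d} (x : pt (S d)) : pt d := fun j => x (Fin.FS j).

Lemma vcons_eta {d} (x : pt (S d)) : x = vcons (x Fin.F1) (vtl x).
Proof.
  apply functional_extensionality; intro i. pattern i; apply Fin.caseS'; reflexivity.
Qed.

Lemma vcons_add {d} t t' (y y' : pt d) : vadd (vcons t y) (vcons t' y') = vcons (t + t') (vadd y y').
Proof. apply functional_extensionality; intro i. pattern i; apply Fin.caseS'; reflexivity. Qed.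
Lemma vcons_scal {d} c t (y : pt d) : vscal c (vcons t y) = vcons (c * t) (vscal c y).
Proof. apply functional_extensionality; intro i. pattern i; apply Fin.caseS'; reflexivity. Qed.
Lemma vcons_sub {d} t t' (y y' : pt d) : vsub (vcons t y) (vcons t' y') = vcons (t - t') (vsub y y').
Proof. apply functional_extensionality; intro i. pattern i; apply Fin.caseS'; reflexivity. Qed.

Lemma semi_restr {d} (N : pt (S d) -> R) : seminorm N -> seminorm (fun y : pt d => N (vcons 0 y)).
Proof.
  intros [h1 h2]; split.
  - intros c x. rewrite <- h1, vcons_scal. replace (c*0) with 0 by ring. reflexivity.
  - intros x y. rewrite <- (Rplus_0_l 0) at 1. rewrite <- vcons_add. apply h2.
Qed.

Lemma norm_restr {d} (N : pt (S d) -> R) : is_norm N -> is_norm (fun y : pt d => N (vcons 0 y)).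
Proof.
  intros hN. destruct (semi_restr N (norm_semi N hN)) as [h1 h2].
  split; [|split; auto].
  intros x hx. destruct hN as [h0 _]. apply h0 in hx.
  apply functional_extensionality; intro j.
  apply (f_equal (fun f => f (Fin.FS j))) in hx. exact hx.
Qed.

Lemma norm_ub : forall d (N : pt d -> R), seminorm N ->
  exists K, 0 < K /\ forall x M, 0 <= M -> (forall i, Rabs (x i) <= M) -> N x <= K * M.
Proof.
  induction d as [|d IH]; intros N hs.
  - exists 1; split; [lra|]. intros x M hM _.
    replace x with (@vzero 0). rewrite (semi_zero N hs); lra.
    apply functional_extensionality; intro i; exact (Fin.case0 (fun i => vzero i = x i) i).
  - destruct (IH _ (semi_restr N hs)) as [K [hK hb]].
    set (e0 := vcons 1 (@vzero d)).
    pose proof (semi_nonneg N hs e0) as he0.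
    exists (N e0 + K); split; [lra|].
    intros x M hM hx.
    rewrite (vcons_eta x).
    replace (vcons (x Fin.F1) (vtl x)) with (vadd (vscal (x Fin.F1) e0) (vcons 0 (vtl x))).
    2:{ unfold e0. rewrite vcons_scal, vcons_add. f_equal. ring.
        apply functional_extensionality; intro j; unfold vadd, vscal, vzero; ring. }
    destruct hs as [h1 h2].
    eapply Rle_trans; [apply h2|]. rewrite h1.
    assert (N (vcons 0 (vtl x)) <= K * M) by (apply hb; auto; intro j; apply hx).
    pose proof (hx Fin.F1).
    assert (Rabs (x Fin.F1) * N e0 <= M * N e0) by (apply Rmult_le_compat_r; auto).
    nra.
Qed.

Lemma fin_uniform : forall d (P : Fin.t d -> nat -> Prop),
  (forall j, exists K, forall k, (K <= k)%nat -> P j k) ->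
  exists K, forall j k, (K <= k)%nat -> P j k.
Proof.
  induction d as [|d IH]; intros P hP.
  - exists 0%nat. intros j; exact (Fin.case0 (fun j => forall k, (0 <= k)%nat -> P j k) j).
  - destruct (hP Fin.F1) as [K1 h1].
    destruct (IH (fun j k => P (Fin.FS j) k)) as [K2 h2].
    { intro j; apply hP. }
    exists (Nat.max K1 K2). intros j k hk. pattern j; apply Fin.caseS'.
    + apply h1; lia.
    + intro p; apply h2; lia.
Qed.

Lemma small_inv : forall e, 0 < e -> exists n : nat, / (INR n + 1) < e.
Proof.
  intros e he. destruct (archimed (/ e)) as [h1 _].
  assert (0 < / e) by (apply Rinv_0_lt_compat; auto).
  assert (0 <= up (/ e))%Z by (apply le_IZR; lra).
  exists (Z.to_nat (up (/ e))).
  rewrite INR_IZR_INZ, Z2Nat.id by auto.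
  replace e with (/ / e) at 2 by (field; lra).
  apply Rinv_lt_contravar; nra.
Qed.

Lemma semi_sub_le {d} (N : pt d -> R) : seminorm N -> forall x y, N (vsub x y) <= N x + N y.
Proof.
  intros hs x y. pose proof (semi_tri N hs x y vzero) as t.
  replace (vsub x vzero) with x in t.
  2:{ apply functional_extensionality; intro i; unfold vsub, vzero; ring. }
  rewrite (semi_sym N hs vzero y) in t.
  replace (vsub y vzero) with y in t. exact t.
  apply functional_extensionality; intro i; unfold vsub, vzero; ring.
Qed.

Lemma norm_lb : forall d (N : pt d -> R), is_norm N ->
  exists m, 0 < m /\ forall x i, m * Rabs (x i) <= N x.
Proof.
  induction d as [|d IH]; intros N hN.
  - exists 1; split; [lra|]. intros x i; exact (Fin.case0 (fun i => 1 * Rabs (x i) <= N x) i).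
  - destruct (IH _ (norm_restr N hN)) as [m' [hm' hlb]].
    pose proof (norm_semi N hN) as hs.
    destruct (norm_ub d _ (semi_restr N hs)) as [K' [hK' hub]].
    assert (hd : exists dl, 0 < dl /\ forall y, dl <= N (vcons 1 y)).
    { apply NNPP; intro hneg.
      assert (hsmall : forall e, 0 < e -> exists y, N (vcons 1 y) < e).
      { intros e he. apply NNPP; intro h2. apply hneg. exists e; split; auto.
        intro y. apply Rnot_lt_le. intro h3. apply h2. exists y; auto. }
      assert (hp : forall k : nat, 0 < / (INR k + 1)).
      { intro k; apply Rinv_0_lt_compat; pose proof (pos_INR k); lra. }
      pose (yk := fun k : nat => proj1_sig (constructive_indefinite_description _ (hsmall _ (hp k)))).
      assert (hyk : forall k, N (vcons 1 (yk k)) < / (INR k + 1)).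
      { intro k. exact (proj2_sig (constructive_indefinite_description _ (hsmall _ (hp k)))). }
      assert (hmono : forall n k : nat, (n <= k)%nat -> / (INR k + 1) <= / (INR n + 1)).
      { intros n k hnk. apply Rinv_le_contravar. pose proof (pos_INR n); lra.
        apply le_INR in hnk; lra. }
      assert (hC : forall j, Cauchy_crit (fun k => yk k j)).
      { intros j eps heps. destruct (small_inv (eps * m' / 2)) as [n0 hn0].
        { apply Rmult_lt_0_compat; [nra|lra]. }
        exists n0. intros n k hn hk. unfold R_dist.
        pose proof (hlb (vsub (yk n) (yk k)) j) as t. simpl in t.
        replace (vcons 0 (vsub (yk n) (yk k))) with (vsub (vcons 1 (yk n)) (vcons 1 (yk k))) in t
          by (rewrite vcons_sub; f_equal; ring).
        pose proof (semi_sub_le N hs (vcons 1 (yk n)) (vcons 1 (yk k))) as t2.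
        pose proof (hyk n); pose proof (hyk k). pose proof (hmono _ _ hn); pose proof (hmono _ _ hk).
        change (vsub (yk n) (yk k) j) with (yk n j - yk k j) in t.
        assert (m' * Rabs (yk n j - yk k j) < m' * eps) by lra.
        apply Rmult_lt_reg_l in H3; auto. }
      pose (ys := fun j => proj1_sig (R_complete _ (hC j))).
      assert (hys : forall j, Un_cv (fun k => yk k j) (ys j)).
      { intro j. exact (proj2_sig (R_complete _ (hC j))). }
      assert (hz : N (vcons 1 ys) = 0).
      { set (L := N (vcons 1 ys)). pose proof (semi_nonneg N hs (vcons 1 ys)) as hL0.
        destruct (Req_dec L 0) as [e|ne]; auto. exfalso.
        assert (hLp : 0 < L) by (fold L in hL0; lra).
        destruct (fin_uniform d (fun j k => Rabs (ys j - yk k j) < L / (2 * K'))) as [K0 hK0].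
        { intro j. destruct (hys j (L / (2 * K'))) as [K hK].
          { apply Rdiv_lt_0_compat; lra. }
          exists K. intros k hk. specialize (hK k hk). unfold R_dist in hK.
          rewrite Rabs_minus_sym; auto. }
        destruct (small_inv (L / 2)) as [n1 hn1]; [lra|].
        set (k := Nat.max K0 n1).
        assert (ee : vcons 1 ys = vadd (vcons 1 (yk k)) (vcons 0 (vsub ys (yk k)))).
        { rewrite vcons_add. f_equal; [ring|].
          apply functional_extensionality; intro i; unfold vadd, vsub; ring. }
        pose proof (proj2 hs (vcons 1 (yk k)) (vcons 0 (vsub ys (yk k)))) as t.
        rewrite <- ee in t. fold L in t.
        assert (N (vcons 0 (vsub ys (yk k))) <= K' * (L / (2 * K'))).
        { apply hub. apply Rlt_le, Rdiv_lt_0_compat; lra.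
          intro i. unfold vsub. apply Rlt_le, hK0. unfold k; lia. }
        replace (K' * (L / (2 * K'))) with (L / 2) in H by (field; lra).
        pose proof (hyk k). pose proof (hmono n1 k ltac:(unfold k; lia)). lra. }
      apply (proj1 hN) in hz. apply (f_equal (fun f => f Fin.F1)) in hz.
      simpl in hz. unfold vzero in hz. lra. }
    destruct hd as [dl [hdl hdl2]].
    set (e0 := vcons 1 (@vzero d)). pose proof (semi_nonneg N hs e0) as he0.
    assert (hA : forall t y, dl * Rabs t <= N (vcons t y)).
    { intros t y. destruct (Req_dec t 0) as [e|ne].
      - subst. rewrite Rabs_R0, Rmult_0_r. apply semi_nonneg, hs.
      - replace (vcons t y) with (vscal t (vcons 1 (vscal (/ t) y))).
        + rewrite (proj1 hs). pose proof (hdl2 (vscal (/ t) y)). pose proof (Rabs_pos t). nra.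
        + rewrite vcons_scal. f_equal; [ring|].
          apply functional_extensionality; intro i; unfold vscal; field; auto. }
    assert (hB : forall t y j, m' * Rabs (y j) <= (1 + N e0 / dl) * N (vcons t y)).
    { intros t y j. pose proof (hlb y j) as t1. simpl in t1.
      replace (vcons 0 y) with (vadd (vcons t y) (vscal (- t) e0)) in t1.
      2:{ unfold e0. rewrite vcons_scal, vcons_add. f_equal; [ring|].
          apply functional_extensionality; intro i; unfold vadd, vscal, vzero; ring. }
      pose proof (proj2 hs (vcons t y) (vscal (- t) e0)) as t2.
      rewrite (proj1 hs), Rabs_Ropp in t2.
      pose proof (hA t y).
      assert (Rabs t * N e0 <= N (vcons t y) / dl * N e0).
      { apply Rmult_le_compat_r; auto. apply (Rmult_le_reg_l dl); auto.
        replace (dl * (N (vcons t y) / dl)) with (N (vcons t y)) by (field; lra). lra. }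
      replace ((1 + N e0 / dl) * N (vcons t y)) with (N (vcons t y) + N (vcons t y) / dl * N e0)
        by (field; lra). lra. }
    assert (hq : 0 < 1 + N e0 / dl).
    { assert (0 <= N e0 / dl) by (unfold Rdiv; apply Rmult_le_pos; [lra|apply Rlt_le, Rinv_0_lt_compat; lra]). lra. }
    exists (Rmin dl (m' / (1 + N e0 / dl))). split.
    { apply Rmin_glb_lt; auto. apply Rdiv_lt_0_compat; auto. }
    intros x i. rewrite (vcons_eta x). pattern i; apply Fin.caseS'.
    + simpl. eapply Rle_trans; [|apply hA]. apply Rmult_le_compat_r; [apply Rabs_pos|apply Rmin_l].
    + intro j. simpl. eapply Rle_trans.
      { apply Rmult_le_compat_r; [apply Rabs_pos|apply Rmin_r]. }
      pose proof (hB (x Fin.F1) (vtl x) j).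
      apply (Rmult_le_reg_l (1 + N e0 / dl)); auto.
      replace ((1 + N e0 / dl) * (m' / (1 + N e0 / dl) * Rabs (vtl x j))) with (m' * Rabs (vtl x j))
        by (field; lra). lra.
Qed.

Lemma exp_le' : forall x y, x <= y -> exp x <= exp y.
Proof. intros x y [h|h]; [apply Rlt_le, exp_increasing; auto|subst; lra]. Qed.
Lemma ln_le' : forall x y, 0 < x -> x <= y -> ln x <= ln y.
Proof. intros x y hx [h|h]; [apply Rlt_le, ln_increasing; auto|subst; lra]. Qed.

Lemma p2pos : forall z, 0 < powerRZ 2 z.
Proof. intro; apply powerRZ_lt; lra. Qed.

Lemma p2add : forall z w, powerRZ 2 (z + w) = powerRZ 2 z * powerRZ 2 w.
Proof. intros; apply powerRZ_add; lra. Qed.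

Lemma p2inv : forall z, powerRZ 2 (- z) * powerRZ 2 z = 1.
Proof. intro z. rewrite <- p2add. replace (- z + z)%Z with 0%Z by lia. reflexivity. Qed.

Lemma p2exp : forall z, powerRZ 2 z = exp (IZR z * ln 2).
Proof. intro z. rewrite powerRZ_Rpower by lra. reflexivity. Qed.

Lemma p2le : forall z w, (z <= w)%Z -> powerRZ 2 z <= powerRZ 2 w.
Proof.
  intros z w h. rewrite !p2exp. apply exp_le'. apply IZR_le in h.
  assert (0 < ln 2) by (rewrite <- ln_1; apply ln_increasing; lra). nra.
Qed.

Lemma p2lt_inv : forall z w, powerRZ 2 z < powerRZ 2 w -> (z < w)%Z.
Proof.
  intros z w h. destruct (Z_lt_le_dec z w); auto. apply p2le in l. lra.
Qed.

Lemma p2nat : forall n : nat, powerRZ 2 (Z.of_nat n) = 2 ^ n.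
Proof. intro; rewrite pow_powerRZ; reflexivity. Qed.

Lemma log2_floor : forall t, 0 < t -> exists f : Z, powerRZ 2 f <= t < powerRZ 2 (f + 1).
Proof.
  intros t ht. assert (hl : 0 < ln 2) by (rewrite <- ln_1; apply ln_increasing; lra).
  set (f := Int_part (ln t / ln 2)). exists f.
  destruct (base_Int_part (ln t / ln 2)) as [h1 h2]. fold f in h1, h2.
  rewrite !p2exp, plus_IZR. rewrite <- (exp_ln t) by auto.
  split.
  - apply exp_le'. apply (Rmult_le_compat_r (ln 2)) in h1; [|lra].
    replace (ln t / ln 2 * ln 2) with (ln t) in h1 by (field; lra). lra.
  - apply exp_increasing.
    assert (ln t / ln 2 < IZR f + 1) by lra.
    apply (Rmult_lt_compat_r (ln 2)) in H; [|lra].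
    replace (ln t / ln 2 * ln 2) with (ln t) in H by (field; lra). lra.
Qed.


Definition kof {d} (g : Z) (x : pt d) : Fin.t d -> Z := fun i => Int_part (x i * powerRZ 2 g).

Lemma dcube_iff {d} : forall g (k : Fin.t d -> Z) (x : pt d),
  dcube g k x <-> forall i, IZR (k i) <= x i * powerRZ 2 g < IZR (k i) + 1.
Proof.
  intros g k x. pose proof (p2pos g). pose proof (p2pos (- g)). pose proof (p2inv g).
  unfold dcube; split; intros h i; specialize (h i).
  - destruct h as [h1 h2]. split.
    + apply (Rmult_le_compat_r (powerRZ 2 g)) in h1; [|lra].
      replace (IZR (k i) * powerRZ 2 (- g) * powerRZ 2 g) with (IZR (k i)) in h1 by (rewrite Rmult_assoc, H1; ring). auto.
    + apply (Rmult_lt_compat_r (powerRZ 2 g)) in h2; [|lra].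
      replace ((IZR (k i) + 1) * powerRZ 2 (- g) * powerRZ 2 g) with (IZR (k i) + 1) in h2 by (rewrite Rmult_assoc, H1; ring). auto.
  - destruct h as [h1 h2]. split.
    + apply (Rmult_le_compat_r (powerRZ 2 (-g))) in h1; [|lra].
      replace (x i * powerRZ 2 g * powerRZ 2 (- g)) with (x i) in h1 by (rewrite Rmult_assoc, (Rmult_comm (powerRZ 2 g)), H1; ring). auto.
    + apply (Rmult_lt_compat_r (powerRZ 2 (-g))) in h2; [|lra].
      replace (x i * powerRZ 2 g * powerRZ 2 (- g)) with (x i) in h2 by (rewrite Rmult_assoc, (Rmult_comm (powerRZ 2 g)), H1; ring). auto.
Qed.

Lemma dcube_kof {d} : forall g (x : pt d), dcube g (kof g x) x.
Proof.
  intros g x. apply dcube_iff. intro i. unfold kof.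
  destruct (base_Int_part (x i * powerRZ 2 g)); split; lra.
Qed.

Lemma dcube_unique {d} : forall g (k : Fin.t d -> Z) (x : pt d), dcube g k x -> k = kof g x.
Proof.
  intros g k x h0. pose proof (proj1 (dcube_iff g k x) h0) as h. apply functional_extensionality; intro i.
  unfold kof. apply Int_part_spec. specialize (h i). lra.
Qed.

Lemma dcube_close {d} : forall g (k : Fin.t d -> Z) (x y : pt d) i, dcube g k x -> dcube g k y -> Rabs (x i - y i) < powerRZ 2 (- g).
Proof.
  intros g k x y i hx hy. specialize (hx i); specialize (hy i).
  apply Rabs_def1; lra.
Qed.

Lemma dcube_far {d} : forall g (k k' : Fin.t d -> Z) (x y : pt d) i, dcube g k x -> dcube g k' y ->
  (2 <= Z.abs (k i - k' i))%Z -> powerRZ 2 (- g) < Rabs (x i - y i).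
Proof.
  intros g k k' x y i hx hy hk. specialize (hx i); specialize (hy i).
  pose proof (p2pos (- g)).
  destruct (Z_le_gt_dec (k i) (k' i)).
  - assert (k i + 2 <= k' i)%Z by lia. apply IZR_le in H0. rewrite plus_IZR in H0.
    rewrite Rabs_minus_sym, Rabs_right; nra.
  - assert (k' i + 2 <= k i)%Z by lia. apply IZR_le in H0. rewrite plus_IZR in H0.
    rewrite Rabs_right; nra.
Qed.

Lemma parity_far : forall a b : Z, Z.even a = Z.even b -> a <> b -> (2 <= Z.abs (a - b))%Z.
Proof.
  intros a b h hne. assert (Z.even (a - b) = true) by (rewrite Z.even_sub, h; destruct (Z.even b); auto).
  apply Z.even_spec in H. destruct H as [c hc]. lia.
Qed.

Fixpoint fin_list (n : nat) : list (Fin.t n) :=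
  match n with 0 => nil | S m => Fin.F1 :: map Fin.FS (fin_list m) end.

Lemma fin_list_len : forall n, length (fin_list n) = n.
Proof. induction n; simpl; auto. rewrite length_map; auto. Qed.

Lemma fin_list_in : forall n (i : Fin.t n), In i (fin_list n).
Proof.
  induction n; intro i. exact (Fin.case0 _ i).
  pattern i; apply Fin.caseS'. left; auto. intro p; right; apply in_map; auto.
Qed.


Lemma list_choice {X Y} (Q : X -> Y -> Prop) : forall l,
  (forall x, In x l -> exists y, Q x y) -> exists l', Forall2 Q l l'.
Proof.
  induction l as [|x l IH]; intro h. exists nil; constructor.
  destruct (h x (or_introl eq_refl)) as [y hy].
  destruct IH as [l' hl']. intros z hz; apply h; right; auto.
  exists (y :: l'); constructor; auto.
Qed.

Lemma nodup_map_inj {X Y} (f : X -> Y) : forall l x y,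
  NoDup (map f l) -> In x l -> In y l -> f x = f y -> x = y.
Proof.
  induction l as [|z l IH]; intros x y hn hx hy he. destruct hx.
  simpl in hn. inversion hn; subst.
  destruct hx as [<-|hx]; destruct hy as [<-|hy]; auto.
  - exfalso; apply H1; rewrite he; apply in_map; auto.
  - exfalso; apply H1; rewrite <- he; apply in_map; auto.
Qed.

Lemma pigeon {X} : forall (F : list (X -> bool)) (l : list X),
  exists l', incl l' l /\ (NoDup l -> NoDup l') /\ (length l <= 2 ^ length F * length l')%nat /\
    forall q, In q F -> forall x y, In x l' -> In y l' -> q x = q y.
Proof.
  induction F as [|q F IH]; intro l.
  - exists l; repeat split; auto. intros a ha; auto. simpl; lia. intros q [].
  - pose proof (filter_length q l) as hlen.
    assert (hsel : exists l1, incl l1 l /\ (NoDup l -> NoDup l1) /\ (length l <= 2 * length l1)%nat /\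
               forall x y, In x l1 -> In y l1 -> q x = q y).
    { destruct (Nat.le_gt_cases (length (filter (fun x => negb (q x)) l)) (length (filter q l))).
      - exists (filter q l); repeat split.
        + intros a ha; apply filter_In in ha; tauto.
        + apply NoDup_filter.
        + lia.
        + intros x y hx hy. apply filter_In in hx; apply filter_In in hy.
          destruct hx as [_ ->]; destruct hy as [_ ->]; auto.
      - exists (filter (fun x => negb (q x)) l); repeat split.
        + intros a ha; apply filter_In in ha; tauto.
        + apply NoDup_filter.
        + lia.
        + intros x y hx hy. apply filter_In in hx; apply filter_In in hy.
          destruct hx as [_ hx]; destruct hy as [_ hy].
          destruct (q x), (q y); simpl in *; auto; discriminate. }
    destruct hsel as [l1 [h1 [h2 [h3 h4]]]].
    destruct (IH l1) as [l' [g1 [g2 [g3 g4]]]].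
    exists l'; repeat split.
    + intros a ha; apply h1, g1, ha.
    + intro hn; apply g2, h2, hn.
    + simpl. lia.
    + intros q' [<-|hq] x y hx hy. apply h4; apply g1; auto. apply g4; auto.
Qed.

Lemma rp_le : forall d x h, (1 <= d)%nat -> 0 < x -> 0 < h -> x <= h ^ d -> Rpower x (/ INR d) <= h.
Proof.
  intros d x h hd hx hh hle. unfold Rpower. rewrite <- (exp_ln h) by auto. apply exp_le'.
  apply ln_le' in hle; auto. rewrite ln_pow in hle by auto.
  assert (0 < INR d) by (apply lt_0_INR; lia).
  apply (Rmult_le_compat_l (/ INR d)) in hle; [|apply Rlt_le, Rinv_0_lt_compat; auto].
  replace (/ INR d * (INR d * ln h)) with (ln h) in hle by (field; lra). lra.
Qed.

Lemma rp_ge : forall d x h, (1 <= d)%nat -> 0 < x -> 0 < h -> Rpower x (/ INR d) <= h -> x <= h ^ d.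
Proof.
  intros d x h hd hx hh hle. unfold Rpower in hle.
  rewrite <- (exp_ln h) in hle by auto.
  assert (/ INR d * ln x <= ln h).
  { destruct (Rle_lt_dec (/ INR d * ln x) (ln h)); auto. apply exp_increasing in r. lra. }
  assert (0 < INR d) by (apply lt_0_INR; lia).
  apply (Rmult_le_compat_l (INR d)) in H; [|lra].
  replace (INR d * (/ INR d * ln x)) with (ln x) in H by (field; lra).
  rewrite <- ln_pow in H by auto.
  rewrite <- (exp_ln x) by auto. rewrite <- (exp_ln (h ^ d)) by (apply pow_lt; auto).
  apply exp_le'; auto.
Qed.

Lemma p2mul : forall (d : nat) z, powerRZ 2 (Z.of_nat d * z) = (powerRZ 2 z) ^ d.
Proof.
  induction d; intro z. reflexivity.
  replace (Z.of_nat (S d) * z)%Z with (z + Z.of_nat d * z)%Z by lia.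
  rewrite p2add, IHd. simpl. ring.
Qed.

Lemma p2opp : forall z, powerRZ 2 (- z) = / powerRZ 2 z.
Proof.
  intro z. pose proof (p2inv z). pose proof (p2pos z).
  apply (Rmult_eq_reg_r (powerRZ 2 z)); [|lra]. rewrite H. field; lra.
Qed.

Lemma least_index : forall {X} (a : nat -> X) x, (exists n, (1 <= n)%nat /\ a n = x) ->
  exists n0, (1 <= n0)%nat /\ a n0 = x /\ forall n, (1 <= n)%nat -> a n = x -> (n0 <= n)%nat.
Proof.
  intros X a x hex.
  destruct (Wf_nat.dec_inh_nat_subset_has_unique_least_element (fun n => (1 <= n)%nat /\ a n = x))
    as [n0 [[[h1 h2] h3] _]].
  { intro n; apply classic. }
  { auto. }
  exists n0; repeat split; auto.
Qed.

Lemma forall2_map {X Y} (f : Y -> X) (Q : X -> Y -> Prop) : forall l l',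
  (forall x y, Q x y -> x = f y) -> Forall2 Q l l' -> l = map f l'.
Proof.
  intros l l' hq h; induction h; simpl; auto. f_equal; auto.
Qed.

Lemma forall2_in_r {X Y} (Q : X -> Y -> Prop) : forall l l' y,
  Forall2 Q l l' -> In y l' -> exists x, In x l /\ Q x y.
Proof.
  intros l l' y h; induction h; intro hy. destruct hy.
  destruct hy as [<-|hy]. exists x; split; auto; left; auto.
  destruct (IHh hy) as [z [hz hq]]. exists z; split; auto; right; auto.
Qed.

Lemma nat_le_pow : forall d j, (1 <= d)%nat -> INR j <= 2 ^ (d * j).
Proof.
  intros d j hd.
  replace 2 with (INR 2) by (simpl; ring). rewrite <- pow_INR. apply le_INR.
  pose proof (Nat.pow_gt_lin_r 2 j ltac:(lia)).
  assert (2 ^ j <= 2 ^ (d * j))%nat by (apply Nat.pow_le_mono_r; nia). lia.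
Qed.

Lemma cube_in_ball {d} (N : pt d -> R) K : 0 < K ->
  (forall x M, 0 <= M -> (forall i, Rabs (x i) <= M) -> N x <= K * M) ->
  forall c r, 0 < r -> exists j0, subset (dcube j0 (kof j0 c)) (ball N c r) /\ r / (4 * K) < powerRZ 2 (- j0).
Proof.
  intros hK hub c r hr.
  destruct (log2_floor (r / (2 * K))) as [f [hf1 hf2]]. { apply Rdiv_lt_0_compat; lra. }
  exists (- f)%Z. rewrite Z.opp_involutive. split.
  - intros x hx. unfold ball.
    assert (N (vsub x c) <= K * powerRZ 2 f).
    { apply hub. apply Rlt_le, p2pos. intro i. unfold vsub. apply Rlt_le.
      pose proof (dcube_close (- f) _ x c i hx (dcube_kof (- f) c)). rewrite Z.opp_involutive in H. auto. }
    assert (K * powerRZ 2 f <= K * (r / (2 * K))) by (apply Rmult_le_compat_l; lra).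
    replace (K * (r / (2 * K))) with (r / 2) in H0 by (field; lra). lra.
  - rewrite p2add in hf2. simpl in hf2.
    replace (r / (4 * K)) with (r / (2 * K) / 2) by (field; lra). lra.
Qed.

Lemma nat_gt : forall t, exists n : nat, t < INR n.
Proof.
  intro t. destruct (archimed t) as [h1 _].
  destruct (Z_le_gt_dec 0 (up t)).
  - exists (Z.to_nat (up t)). rewrite INR_IZR_INZ, Z2Nat.id by auto. lra.
  - exists 0%nat. simpl. apply Z.gt_lt, IZR_lt in g. lra.
Qed.

Theorem proposition9p4 (d : nat) (hd : (1 <= d)%nat) (N : pt d -> R) (hN : is_norm N)
  (U : pt d -> Prop) (hUo : is_open N U) (hUne : exists x, U x)
  (a : nat -> pt d) (haU : forall n, (1 <= n)%nat -> U (a n))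
  (hdense : exists c, c > 0 /\
     forall (j0 : Z) (k : Fin.t d -> Z), subset (dcube j0 k) U ->
     forall eps, eps > 0 -> exists J : nat, forall j : nat, (J <= j)%nat ->
       exists m : nat, card_ge (inM a j0 k j) m /\
                       powerRZ 2 (- (Z.of_nat d * Z.of_nat j)) * INR m > c - eps)
  (A : pt d -> Prop) (hA : forall x, A x <-> exists n, (1 <= n)%nat /\ a n = x)
  (H : pt d -> R)
  (hH : forall n, (1 <= n)%nat -> (forall m, (1 <= m < n)%nat -> a m <> a n) ->
        H (a n) = Rpower (INR n) (/ INR d)) :
  optimal_regular_system N A H U.
Proof.
  pose proof (norm_semi N hN) as hs.
  destruct (norm_ub d N hs) as [K [hK hub]].
  destruct (norm_lb d N hN) as [m0 [hm0 hlb]].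
  destruct hdense as [cd [hcd hdense]].
  assert (Hval : forall x, A x -> exists n0, (1 <= n0)%nat /\ a n0 = x /\
            H x = Rpower (INR n0) (/ INR d) /\ forall n, (1 <= n)%nat -> a n = x -> (n0 <= n)%nat).
  { intros x hx. apply hA in hx. destruct (least_index a x hx) as [n0 [h1 [h2 h3]]].
    exists n0; repeat split; auto. rewrite <- h2. apply hH; auto.
    intros m hm he. specialize (h3 m (proj1 hm) (eq_trans he h2)). lia. }
  assert (hadm : admissible N A H).
  { split; [split|split].
    - exists (fun n => a (S n)). intro x. rewrite hA. split.
      + intros [n [hn he]]. exists (n - 1)%nat. replace (S (n - 1)) with n by lia. auto.
      + intros [n he]. exists (S n); split; auto; lia.
    - intros [l hl].
      destruct hUne as [x0 hx0]. destruct (hUo x0 hx0) as [r [hr hsub]].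
      destruct (cube_in_ball N K hK hub x0 r hr) as [j0 [hc _]].
      destruct (hdense j0 (kof j0 x0) (fun y hy => hsub y (hc y hy)) (cd / 2)) as [J hJ]. lra.
      destruct (nat_gt (2 * INR (length l) / cd)) as [n1 hn1].
      destruct (hJ (Nat.max J n1) ltac:(lia)) as [mm [[ks [hks1 [hks2 hks3]]] hmm]].
      set (j := Nat.max J n1) in *.
      set (g := (j0 + Z.of_nat j)%Z) in *.
      assert (hincl : incl ks (map (kof g) l)).
      { intros k' hk'. destruct (hks3 k' hk') as [_ [n [hn1' [_ hn3]]]].
        assert (In (a n) l) by (apply hl, hA; exists n; auto).
        rewrite (dcube_unique _ _ _ hn3). apply in_map; auto. }
      apply NoDup_incl_length in hincl; auto. rewrite length_map in hincl.
      apply le_INR in hincl. rewrite hks2 in hincl.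
      rewrite <- Nat2Z.inj_mul in hmm.
      rewrite p2opp, p2nat in hmm.
      pose proof (nat_le_pow d j hd).
      assert (INR n1 <= INR j) by (apply le_INR; unfold j; lia).
      assert (0 < 2 ^ (d * j)) by (apply pow_lt; lra).
      assert (INR mm > cd / 2 * 2 ^ (d * j)).
      { apply (Rmult_lt_reg_l (/ 2 ^ (d * j))). apply Rinv_0_lt_compat; auto.
        replace (/ 2 ^ (d * j) * (cd / 2 * 2 ^ (d * j))) with (cd / 2) by (field; lra). lra. }
      assert (2 * INR (length l) < cd * INR n1).
      { apply (Rmult_lt_compat_l cd) in hn1; auto.
        replace (cd * (2 * INR (length l) / cd)) with (2 * INR (length l)) in hn1 by (field; lra). lra. }
      nra.
    - intros x hx. destruct (Hval x hx) as [n0 [_ [_ [-> _]]]]. apply exp_pos.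
    - intros m hm. exists (map a (seq 1 (m ^ d))). intros x hx hN1 hH1.
      destruct (Hval x hx) as [n0 [h1 [h2 [h3 _]]]]. rewrite <- h2. apply in_map.
      apply in_seq. split; auto.
      rewrite h3 in hH1. apply rp_ge in hH1; auto.
      2:{ apply lt_0_INR; lia. } 2:{ apply lt_0_INR; lia. }
      rewrite <- pow_INR in hH1. apply INR_le in hH1. lia. }

  assert (hzero : forall x, N (vsub x x) = 0).
  { intro x. replace (vsub x x) with (@vzero d) by (apply functional_extensionality; intro; unfold vsub, vzero; ring).
    apply semi_zero; auto. }
  split.
  - split; auto. intros c r hr. exists 2, 1. split; [lra|split;[lra|]].
    intros h hh l hl hin.
    set (M := Z.to_nat (up (h ^ d))).
    assert (hhd : 1 <= h ^ d) by (apply pow_R1_Rle; lra).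
    destruct (archimed (h ^ d)) as [ha1 ha2].
    assert (hup : (0 <= up (h ^ d))%Z) by (apply le_IZR; lra).
    assert (hM : INR M = IZR (up (h ^ d))) by (unfold M; rewrite INR_IZR_INZ, Z2Nat.id; auto).
    assert (hinc : incl l (map a (seq 1 M))).
    { intros x hx. destruct (hin x hx) as [hAx [_ [_ hHx]]].
      destruct (Hval x hAx) as [n0 [h1 [h2 [h3 _]]]]. rewrite <- h2. apply in_map, in_seq.
      rewrite h3 in hHx. apply rp_ge in hHx; auto. 2:{ apply lt_0_INR; lia. } 2: lra.
      assert (hlt : INR n0 < INR M) by lra. apply INR_lt in hlt. lia. }
    apply NoDup_incl_length in hinc; auto. rewrite length_map, length_seq in hinc.
    apply le_INR in hinc. lra.
  - split; auto.
    set (m1 := Rmin m0 1).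
    assert (hm1 : 0 < m1) by (apply Rmin_glb_lt; lra).
    assert (hm1' : m1 <= 1) by apply Rmin_r.
    assert (hlb1 : forall x i, m1 * Rabs (x i) <= N x).
    { intros x i. eapply Rle_trans; [|apply hlb]. apply Rmult_le_compat_r; [apply Rabs_pos|apply Rmin_l]. }
    exists (cd / 2 ^ (d + 1) * (m1 / (16 * K)) ^ d). split.
    { apply Rmult_lt_0_compat. apply Rdiv_lt_0_compat; auto; apply pow_lt; lra.
      apply pow_lt, Rdiv_lt_0_compat; lra. }
    intros cc r hr hsub D hD.
    assert (hD0 : 0 <= D).
    { apply (proj1 hD). exists cc, cc. unfold ball. rewrite hzero. split; [lra|split; [lra|auto]]. }
    assert (hD2 : D <= 2 * r).
    { apply (proj2 hD). intros t [x [y [hx [hy ->]]]]. unfold ball in hx, hy.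
      pose proof (semi_tri N hs x y cc) as ht. rewrite (semi_sym N hs cc y) in ht. lra. }
    destruct (cube_in_ball N K hK hub cc r hr) as [j0 [hcb hs0]].
    set (k0 := kof j0 cc).
    destruct (hdense j0 k0 (fun y hy => hsub y (hcb y hy)) (cd / 2)) as [J hJ]; [lra|].
    exists (powerRZ 2 (j0 + Z.of_nat J + 1) / m1). split.
    { apply Rdiv_lt_0_compat; auto; apply p2pos. }
    intros h hh.
    assert (hh0 : 0 < h).
    { assert (0 < powerRZ 2 (j0 + Z.of_nat J + 1) / m1) by (apply Rdiv_lt_0_compat; auto; apply p2pos). lra. }
    destruct (log2_floor (m1 * h)) as [g [hg1 hg2]]; [nra|].
    assert (hgJ : (j0 + Z.of_nat J <= g)%Z).
    { assert (hlt : powerRZ 2 (j0 + Z.of_nat J + 1) < powerRZ 2 (g + 1)).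
      { apply (Rmult_lt_compat_r m1) in hh; auto. unfold Rdiv in hh.
        rewrite Rmult_assoc, Rinv_l in hh; lra. }
      apply p2lt_inv in hlt. lia. }
    set (j := Z.to_nat (g - j0)).
    assert (hj : Z.of_nat j = (g - j0)%Z) by (unfold j; rewrite Z2Nat.id; lia).
    destruct (hJ j ltac:(lia)) as [mm [[ks [hks1 [hks2 hks3]]] hmm]].
    assert (hg : (j0 + Z.of_nat j)%Z = g) by lia.
    unfold inM in hks3. rewrite hg in hks3.
    assert (hch : forall k', In k' ks -> exists p, (dcube g k' p /\ exists n, (1 <= n)%nat /\
               INR n <= powerRZ 2 (Z.of_nat d * g) /\ a n = p)).
    { intros k' hk'. destruct (hks3 k' hk') as [_ [n [hn1 [hn2 hn3]]]].
      exists (a n). split; auto. exists n; auto. }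
    destruct (list_choice _ ks hch) as [ps hps].
    assert (hmap : ks = map (kof g) ps).
    { eapply (forall2_map (kof g)); [|exact hps]. intros x y [hxy _]. apply dcube_unique; auto. }
    assert (hndps : NoDup (map (kof g) ps)) by (rewrite <- hmap; auto).
    assert (hlenps : length ps = mm) by (rewrite <- hks2, hmap, length_map; auto).
    destruct (pigeon (map (fun i (p : pt d) => Z.even (kof g p i)) (fin_list d)) ps)
      as [P' [hP1 [hP2 [hP3 hP4]]]].
    rewrite length_map, fin_list_len in hP3.
    set (G := powerRZ 2 g) in *.
    assert (hG : 0 < G) by apply p2pos.
    assert (hGh : G <= h) by nra.
    exists P'. split; [apply hP2; apply NoDup_map_inv with (f := kof g); auto|].
    split; [|split].
    +
      rewrite p2opp, p2mul, hj in hmm.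
      replace (g - j0)%Z with (g + - j0)%Z in hmm by lia. rewrite p2add in hmm. fold G in hmm.
      set (S0 := powerRZ 2 (- j0)) in *.
      assert (hS0 : 0 < S0) by apply p2pos.
      rewrite p2add in hg2. fold G in hg2. simpl in hg2.
      assert (hB : m1 * h * D / (16 * K) <= G * S0).
      { assert (D / (8 * K) <= S0).
        { apply Rlt_le. eapply Rle_lt_trans; [|apply hs0].
          unfold Rdiv. rewrite Rinv_mult, Rinv_mult.
          assert (0 < / K) by (apply Rinv_0_lt_compat; auto).
          replace (/ 8) with (/ 2 * / 4) by field. nra. }
        replace (m1 * h * D / (16 * K)) with ((m1 * h / 2) * (D / (8 * K))) by (field; lra).
        apply Rmult_le_compat; [nra| apply Rmult_le_pos; [lra|apply Rlt_le, Rinv_0_lt_compat; lra] | lra | lra]. }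
      assert (hBd : (m1 * h * D / (16 * K)) ^ d <= (G * S0) ^ d).
      { apply pow_incr. split; auto. apply Rmult_le_pos; [nra|]. apply Rlt_le, Rinv_0_lt_compat; lra. }
      replace ((m1 * h * D / (16 * K)) ^ d) with ((m1 / (16 * K)) ^ d * D ^ d * h ^ d) in hBd
        by (rewrite <- !Rpow_mult_distr; f_equal; field; lra).
      assert (hBp : 0 < (G * S0) ^ d) by (apply pow_lt; nra).
      assert (hmm2 : cd / 2 * (G * S0) ^ d < INR mm).
      { apply (Rmult_lt_reg_l (/ (G * S0) ^ d)). apply Rinv_0_lt_compat; auto.
        replace (/ (G * S0) ^ d * (cd / 2 * (G * S0) ^ d)) with (cd / 2) by (field; lra). lra. }
      apply le_INR in hP3. rewrite mult_INR, pow_INR in hP3. simpl INR in hP3. replace (1 + 1) with 2 in hP3 by ring.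
      rewrite <- hlenps in hmm2.
      assert (h2d : 0 < 2 ^ d) by (apply pow_lt; lra).
      rewrite pow_add. simpl (2 ^ 1).
      set (Q := (m1 / (16 * K)) ^ d * D ^ d * h ^ d) in *.
      apply Rle_ge. apply (Rmult_le_reg_l (2 ^ d)); auto.
      replace (2 ^ d * (cd / (2 ^ d * (2 * 1)) * (m1 / (16 * K)) ^ d * D ^ d * h ^ d)) with (cd / 2 * Q)
        by (unfold Q; field; lra).
      assert (cd / 2 * Q <= cd / 2 * (G * S0) ^ d) by (apply Rmult_le_compat_l; lra).
      lra.
    +
      intros p hp. apply hP1 in hp.
      destruct (forall2_in_r _ _ _ _ hps hp) as [k' [hk' [hdc [n [hn1 [hn2 hn3]]]]]].
      assert (hAp : A p) by (apply hA; exists n; auto).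
      split; [auto|split].
      * apply hcb. destruct (hks3 k' hk') as [hsubk _]. apply hsubk. auto.
      * destruct (Hval p hAp) as [n0 [h1 [h2 [h3 h4]]]].
        rewrite h3. apply rp_le; auto. apply lt_0_INR; lia.
        specialize (h4 n hn1 hn3). apply le_INR in h4. rewrite p2mul in hn2. fold G in hn2.
        assert (G ^ d <= h ^ d) by (apply pow_incr; lra). lra.
    +
      intros p p' hp hp' hne.
      assert (hk : kof g p <> kof g p').
      { intro he. apply hne. apply (nodup_map_inj (kof g) ps); auto. }
      assert (hex : exists i, kof g p i <> kof g p' i).
      { apply NNPP; intro hn. apply hk. apply functional_extensionality; intro i.
        apply NNPP; intro hi. apply hn; exists i; auto. }
      destruct hex as [i hi].
      assert (hpar : Z.even (kof g p i) = Z.even (kof g p' i)).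
      { apply (hP4 (fun p => Z.even (kof g p i))); auto. apply in_map_iff. exists i; split; auto.
        apply fin_list_in. }
      pose proof (dcube_far g _ _ p p' i (dcube_kof g p) (dcube_kof g p') (parity_far _ _ hpar hi)) as hfar.
      pose proof (hlb1 (vsub p p') i) as hl. change (vsub p p' i) with (p i - p' i) in hl.
      rewrite p2opp in hfar. fold G in hfar.
      assert (1 / h <= m1 * / G).
      { replace (1 / h) with (m1 * / (m1 * h)) by (field; lra). apply Rmult_le_compat_l; [lra|].
        apply Rinv_le_contravar; auto. }
      assert (m1 * / G <= m1 * Rabs (p i - p' i)) by (apply Rmult_le_compat_l; lra).
      lra.
Qed.
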